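(* Let $T>0$, $s_0\ge0$ and $S>3/2$. There is a constant $C(S)$ depending only on $S$ such that for every $m\in\mathbb{N}$ and every $v^0\in\dot H^{s_0}$, the solution $v^{(m)}$ of the Galerkin system described in the context with $v^{(m)}(0)=v^0$ satisfies $$\|\partial_t v^{(m)}(t)\|_{\dot H^{-S}}\le C(S)\,\|v^0\|_{\dot H^0}^2,$$ uniformly in $m$, $T$ and $s_0$.
   Context: Write $\mathbb{Z}_0=\mathbb{Z}\setminus\{0\}$. For $s\in\mathbb{R}$, $\dot H^s$ denotes the Hilbert space of sequences $v=(v_k)_{k\in\mathbb{Z}_0}$ of complex numbers with $v_{-k}=\overline{v_k}$ and $\|v\|_{\dot H^s}^2=\sum_{k\in\mathbb{Z}_0}|k|^{2s}|v_k|^2<\infty$. For $m\in\mathbb{N}$ the Galerkin (truncated) KdV system is: for $k\in\mathbb{Z}_0$, $$\partial_t v^{(m)}_k=\begin{cases}\tfrac12 ik\sum_{k_1+k_2=k,\ k_1,k_2\in\mathbb{Z}_0,\ |k_1|,|k_2|\le m}e^{3ikk_1k_2t}v^{(m)}_{k_1}v^{(m)}_{k_2},&|k|\le m,\\ 0,&|k|>m,\end{cases}\qquad v^{(m)}(0)=v^0;$$ its solutions exist for all $t\ge0$. *)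

(* Defs.v *)
From Stdlib Require Import Reals ZArith List Bool.
From Coquelicot Require Import Coquelicot.
Open Scope R_scope.

Definition cis (theta : R) : C := (cos theta, sin theta).

(* Sequences indexed by Z_0 are represented as functions Z -> C whose value at 0 is ignored. *)
Definition zseq := Z -> C.

Definition zrange (m : nat) : list Z :=
  map (fun n => Z.of_nat (S n)) (seq 0 m) ++ map (fun n => (- Z.of_nat (S n))%Z) (seq 0 m).

Definition Csum (l : list C) : C := fold_right Cplus (RtoC 0) l.

Definition galerkin_rhs (m : nat) (v : zseq) (t : R) (k : Z) : C :=
  if ((1 <=? Z.abs k) && (Z.abs k <=? Z.of_nat m))%Z then
    Cmult (Cmult (Cmult (RtoC (1/2)) Ci) (RtoC (IZR k)))
    (Csum (map (fun k1 => Cmult (Cmult (cis (3 * IZR k * IZR k1 * IZR (k - k1)%Z * t)) (v k1)) (v (k - k1)%Z))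
              (filter (fun k1 => negb (Z.eqb (k - k1) 0) && (Z.abs (k - k1) <=? Z.of_nat m))%Z
                      (zrange m))))
  else RtoC 0.

(* squared homogeneous Sobolev norm: sum_{k in Z_0} |k|^{2s} |v_k|^2, summed over pairs +-n *)
Definition hdot_term (s : R) (v : zseq) (n : nat) : R :=
  Rpower (INR (S n)) (2 * s) *
  (Cmod (v (Z.of_nat (S n))) ^ 2 + Cmod (v (- Z.of_nat (S n))%Z) ^ 2).

Definition hdot_norm2 (s : R) (v : zseq) : R := Series (hdot_term s v).

(* membership in \dot H^s: reality condition and finiteness of the norm *)
Definition in_Hdot (s : R) (v : zseq) : Prop :=
  (forall k : Z, k <> 0%Z -> v (- k)%Z = Cconj (v k)) /\ ex_series (hdot_term s v).

Definition time_deriv_on (T : R) (v v' : R -> zseq) : Prop :=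
  forall (k : Z), k <> 0%Z -> forall t : R, 0 <= t <= T ->
    filterdiff (fun s => v s k) (within (fun s => 0 <= s <= T) (locally t))
               (fun h => scal h (v' t k)).

Definition galerkin_solution (m : nat) (T : R) (v0 : zseq) (v v' : R -> zseq) : Prop :=
  (forall k : Z, k <> 0%Z -> v 0 k = v0 k) /\
  time_deriv_on T v v' /\
  (forall k : Z, k <> 0%Z -> forall t : R, 0 <= t <= T -> v' t k = galerkin_rhs m (v t) t k).

(* Main.v *)
Require Import Defs.
From Stdlib Require Import Reals ZArith List Lia Lra Psatz Permutation Bool.
From Coquelicot Require Import Coquelicot.
Open Scope R_scope.


Lemma fold_perm {A} (op:A->A->A) (e:A) (Hc: forall x y, op x y = op y x)
  (Ha: forall x y z, op x (op y z) = op (op x y) z) (l l' : list A) :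
  Permutation l l' -> fold_right op e l = fold_right op e l'.
Proof.
  induction 1; simpl; auto.
  - congruence.
  - rewrite !Ha, (Hc y x); auto.
  - congruence.
Qed.

Lemma fold_if_filter {A B} (op:A->A->A) (e:A) (Hid: forall x, op e x = x)
  (q : B -> bool) (h : B -> A) (l : list B) :
  fold_right op e (map (fun x => if q x then h x else e) l) =
  fold_right op e (map h (filter q l)).
Proof.
  induction l as [|a l IH]; simpl; auto.
  destruct (q a); simpl; rewrite IH; auto.
Qed.

Lemma reindex_if {A} (op:A->A->A) (e:A) (Hc: forall x y, op x y = op y x)
  (Ha: forall x y z, op x (op y z) = op (op x y) z) (Hid: forall x, op e x = x)
  (l : list Z) (phi : Z -> Z) (q : Z -> bool) (g : Z -> A) :
  NoDup l -> (forall x, phi (phi x) = x) ->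
  (forall x, q x = true -> In x l /\ In (phi x) l) ->
  fold_right op e (map (fun x => if q x then g (phi x) else e) l) =
  fold_right op e (map (fun y => if q (phi y) then g y else e) l).
Proof.
  intros Hnd Hinv Hq.
  rewrite (fold_if_filter op e Hid q (fun x => g (phi x))).
  rewrite (fold_if_filter op e Hid (fun y => q (phi y)) g).
  rewrite <- (map_map phi g).
  apply fold_perm; auto.
  apply Permutation_map.
  apply NoDup_Permutation.
  - apply FinFun.Injective_map_NoDup.
    + intros x y H. rewrite <- (Hinv x), <- (Hinv y), H; auto.
    + apply NoDup_filter; auto.
  - apply NoDup_filter; auto.
  - intros y; rewrite in_map_iff, filter_In; split.
    + intros [x [<- Hx]]. apply filter_In in Hx as [Hx1 Hx2].
      rewrite Hinv. split; auto. apply (Hq x Hx2).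
    + intros [Hy1 Hy2]. exists (phi y). split; auto.
      apply filter_In; split; auto. apply (proj1 (Hq _ Hy2)).
Qed.

Lemma reindex_plain {A} (op:A->A->A) (e:A) (Hc: forall x y, op x y = op y x)
  (Ha: forall x y z, op x (op y z) = op (op x y) z)
  (l : list Z) (phi : Z -> Z) (g : Z -> A) :
  NoDup l -> (forall x, phi (phi x) = x) -> (forall x, In x l -> In (phi x) l) ->
  fold_right op e (map (fun x => g (phi x)) l) = fold_right op e (map g l).
Proof.
  intros Hnd Hinv Hq.
  rewrite <- (map_map phi g).
  apply fold_perm; auto.
  apply Permutation_map.
  apply Permutation_sym, NoDup_Permutation; auto.
  - apply FinFun.Injective_map_NoDup; auto.
    intros x y H. rewrite <- (Hinv x), <- (Hinv y), H; auto.
  - intros y; rewrite in_map_iff; split.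
    + intros Hy. exists (phi y); rewrite Hinv; auto.
    + intros [x [<- Hx]]; auto.
Qed.

Lemma fold_pointwise {A B} (op:A->A->A) (e:A) (Hc: forall x y, op x y = op y x)
  (Ha: forall x y z, op x (op y z) = op (op x y) z) (Hid: forall x, op e x = x)
  (a b : B -> A) (l : list B) :
  fold_right op e (map (fun y => op (a y) (b y)) l) =
  op (fold_right op e (map a l)) (fold_right op e (map b l)).
Proof.
  induction l as [|x l IH]; simpl.
  - rewrite Hid; auto.
  - rewrite IH. rewrite !Ha. f_equal. rewrite <- !Ha. f_equal. apply Hc.
Qed.

Lemma fold_exchange {A B D} (op:A->A->A) (e:A) (Hc: forall x y, op x y = op y x)
  (Ha: forall x y z, op x (op y z) = op (op x y) z) (Hid: forall x, op e x = x)
  (l1 : list B) (l2 : list D) (g : B -> D -> A) :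
  fold_right op e (map (fun x => fold_right op e (map (fun y => g x y) l2)) l1) =
  fold_right op e (map (fun y => fold_right op e (map (fun x => g x y) l1)) l2).
Proof.
  induction l1 as [|x l1 IH]; simpl.
  - induction l2; simpl; auto. rewrite <- IHl2, Hid; auto.
  - rewrite IH. rewrite <- fold_pointwise; auto.
Qed.

Definition inI (m:nat) (k:Z) : bool := ((1 <=? Z.abs k) && (Z.abs k <=? Z.of_nat m))%Z.

Lemma inI_true m k : inI m k = true <-> (1 <= Z.abs k <= Z.of_nat m)%Z.
Proof. unfold inI. rewrite andb_true_iff, !Z.leb_le. tauto. Qed.

Lemma inI_opp m k : inI m (- k) = inI m k.
Proof. unfold inI. rewrite Z.abs_opp. auto. Qed.

Lemma In_zrange m k : In k (zrange m) <-> inI m k = true.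
Proof.
  rewrite inI_true. unfold zrange. rewrite in_app_iff, !in_map_iff.
  split.
  - intros [[n [<- Hn]]|[n [<- Hn]]]; apply in_seq in Hn; lia.
  - intros H. destruct (Z_lt_le_dec 0 k).
    + left. exists (Z.to_nat k - 1)%nat. split; [lia|]. apply in_seq; lia.
    + right. exists (Z.to_nat (-k) - 1)%nat. split; [lia|]. apply in_seq; lia.
Qed.

Lemma NoDup_zrange m : NoDup (zrange m).
Proof.
  unfold zrange. apply NoDup_app.
  - apply FinFun.Injective_map_NoDup. intros x y H; lia. apply seq_NoDup.
  - apply FinFun.Injective_map_NoDup. intros x y H; lia. apply seq_NoDup.
  - intros a Ha Hb. apply in_map_iff in Ha as [x [<- _]].
    apply in_map_iff in Hb as [y [H _]]. lia.
Qed.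

Lemma length_zrange m : length (zrange m) = (2 * m)%nat.
Proof. unfold zrange. rewrite length_app, !length_map, length_seq. lia. Qed.

Lemma zrange_opp m k : In k (zrange m) -> In (- k)%Z (zrange m).
Proof. rewrite !In_zrange, inI_opp. auto. Qed.

Definition Rsum (l : list R) : R := fold_right Rplus 0 l.

Lemma Cadd_assoc' : forall x y z : C, Cplus x (Cplus y z) = Cplus (Cplus x y) z.
Proof. intros; apply Cplus_assoc. Qed.
Lemma Radd_assoc' : forall x y z : R, x + (y + z) = (x + y) + z.
Proof. intros; ring. Qed.

Lemma Csum_reindex_if (l : list Z) (phi : Z -> Z) (q : Z -> bool) (g : Z -> C) :
  NoDup l -> (forall x, phi (phi x) = x) ->
  (forall x, q x = true -> In x l /\ In (phi x) l) ->
  Csum (map (fun x => if q x then g (phi x) else RtoC 0) l) =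
  Csum (map (fun y => if q (phi y) then g y else RtoC 0) l).
Proof. apply reindex_if; [apply Cplus_comm|apply Cadd_assoc'|apply Cplus_0_l]. Qed.

Lemma Rsum_reindex_if (l : list Z) (phi : Z -> Z) (q : Z -> bool) (g : Z -> R) :
  NoDup l -> (forall x, phi (phi x) = x) ->
  (forall x, q x = true -> In x l /\ In (phi x) l) ->
  Rsum (map (fun x => if q x then g (phi x) else 0) l) =
  Rsum (map (fun y => if q (phi y) then g y else 0) l).
Proof. apply reindex_if; [apply Rplus_comm|apply Radd_assoc'|apply Rplus_0_l]. Qed.

Lemma Csum_reindex (l : list Z) (phi : Z -> Z) (g : Z -> C) :
  NoDup l -> (forall x, phi (phi x) = x) -> (forall x, In x l -> In (phi x) l) ->
  Csum (map (fun x => g (phi x)) l) = Csum (map g l).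
Proof. apply reindex_plain; [apply Cplus_comm|apply Cadd_assoc']. Qed.

Lemma Csum_neg m (g : Z -> C) :
  Csum (map (fun x => g (- x)%Z) (zrange m)) = Csum (map g (zrange m)).
Proof.
  apply Csum_reindex; [apply NoDup_zrange| intros; lia | apply zrange_opp].
Qed.

Lemma Csum_exchange (l1 l2 : list Z) (g : Z -> Z -> C) :
  Csum (map (fun x => Csum (map (fun y => g x y) l2)) l1) =
  Csum (map (fun y => Csum (map (fun x => g x y) l1)) l2).
Proof. apply fold_exchange; [apply Cplus_comm|apply Cadd_assoc'|apply Cplus_0_l]. Qed.

Lemma Csum_plus {B} (a b : B -> C) l :
  Csum (map (fun y => Cplus (a y) (b y)) l) = Cplus (Csum (map a l)) (Csum (map b l)).
Proof. apply fold_pointwise; [apply Cplus_comm|apply Cadd_assoc'|apply Cplus_0_l]. Qed.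

Lemma Csum_ext_in {B} (a b : B -> C) l :
  (forall x, In x l -> a x = b x) -> Csum (map a l) = Csum (map b l).
Proof. intros H; f_equal; apply map_ext_in; auto. Qed.

Lemma Rsum_ext_in {B} (a b : B -> R) l :
  (forall x, In x l -> a x = b x) -> Rsum (map a l) = Rsum (map b l).
Proof. intros H; f_equal; apply map_ext_in; auto. Qed.

Lemma Csum_scal {B} (c : C) (g : B -> C) l :
  Csum (map (fun x => Cmult c (g x)) l) = Cmult c (Csum (map g l)).
Proof. induction l; unfold Csum in *; cbn [map fold_right] in *. - ring. - rewrite IHl. ring. Qed.

Lemma Csum_zero {B} (l : list B) : Csum (map (fun _ => RtoC 0) l) = RtoC 0.
Proof. induction l; unfold Csum in *; cbn [map fold_right] in *; auto. rewrite IHl. ring. Qed.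

Lemma Csum_conj {B} (g : B -> C) l :
  Cconj (Csum (map g l)) = Csum (map (fun x => Cconj (g x)) l).
Proof.
  induction l; simpl.
  - unfold Cconj, Csum; simpl. rewrite Ropp_0; auto.
  - unfold Csum in *; simpl. rewrite Cplus_conj, IHl. auto.
Qed.

Lemma Re_Csum {B} (g : B -> C) l : fst (Csum (map g l)) = Rsum (map (fun x => fst (g x)) l).
Proof. induction l; simpl; auto. unfold Csum, Rsum in *; simpl. rewrite IHl. auto. Qed.
Lemma Im_Csum {B} (g : B -> C) l : snd (Csum (map g l)) = Rsum (map (fun x => snd (g x)) l).
Proof. induction l; simpl; auto. unfold Csum, Rsum in *; simpl. rewrite IHl. auto. Qed.

Lemma Cmod_Csum {B} (g : B -> C) l :
  Cmod (Csum (map g l)) <= Rsum (map (fun x => Cmod (g x)) l).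
Proof.
  induction l; simpl.
  - unfold Csum; simpl. rewrite Cmod_0. lra.
  - unfold Csum, Rsum in *; simpl. eapply Rle_trans; [apply Cmod_triangle|]. lra.
Qed.

Lemma Rsum_le {B} (a b : B -> R) l :
  (forall x, In x l -> a x <= b x) -> Rsum (map a l) <= Rsum (map b l).
Proof.
  induction l; simpl; intros H. - lra.
  - unfold Rsum in *; simpl. apply Rplus_le_compat. apply H; left; auto. apply IHl; intros; apply H; right; auto.
Qed.

Lemma Rsum_const_le {B} (a : B -> R) l c :
  (forall x, In x l -> a x <= c) -> Rsum (map a l) <= INR (length l) * c.
Proof.
  induction l; cbn [map fold_right length]; intros H. - unfold Rsum; simpl; lra.
  - unfold Rsum in *; cbn [map fold_right length]. rewrite S_INR.
    assert (a a0 <= c) by (apply H; left; auto).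
    assert (fold_right Rplus 0 (map a l) <= INR (length l) * c) by (apply IHl; intros; apply H; right; auto).
    lra.
Qed.

Lemma Rsum_nonneg {B} (a : B -> R) l :
  (forall x, In x l -> 0 <= a x) -> 0 <= Rsum (map a l).
Proof.
  induction l; simpl; intros H. - unfold Rsum; simpl; lra.
  - unfold Rsum in *; simpl. assert (0 <= a a0) by (apply H; left; auto).
    assert (0 <= fold_right Rplus 0 (map a l)) by (apply IHl; intros; apply H; right; auto). lra.
Qed.

Lemma Rsum_ge_term {B} (a : B -> R) l x :
  (forall x, In x l -> 0 <= a x) -> In x l -> a x <= Rsum (map a l).
Proof.
  induction l; simpl; intros H Hx. - destruct Hx.
  - unfold Rsum in *; simpl. destruct Hx as [<-|Hx].
    + assert (0 <= fold_right Rplus 0 (map a l)) by (apply Rsum_nonneg; intros; apply H; right; auto). lra.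
    + assert (0 <= a a0) by (apply H; left; auto).
      assert (a x <= fold_right Rplus 0 (map a l)) by (apply IHl; auto; intros; apply H; right; auto). lra.
Qed.

Lemma Rsum_plus {B} (a b : B -> R) l :
  Rsum (map (fun y => a y + b y) l) = Rsum (map a l) + Rsum (map b l).
Proof. induction l; simpl; unfold Rsum in *; simpl. lra. rewrite IHl. ring. Qed.

Lemma Rsum_scal {B} (c : R) (g : B -> R) l :
  Rsum (map (fun x => c * g x) l) = c * Rsum (map g l).
Proof. induction l; simpl; unfold Rsum in *; simpl. ring. rewrite IHl. ring. Qed.

Definition coef (k:Z) : C := Cmult (Cmult (RtoC (1/2)) Ci) (RtoC (IZR k)).
Definition rterm (v:zseq) (t:R) (k k1:Z) : C :=
  Cmult (Cmult (cis (3 * IZR k * IZR k1 * IZR (k - k1)%Z * t)) (v k1)) (v (k - k1)%Z).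
Definition inner m (v:zseq) t k :=
  Csum (map (fun k1 => if inI m (k - k1) then rterm v t k k1 else RtoC 0) (zrange m)).

Lemma filt_eq m x : (negb (x =? 0) && (Z.abs x <=? Z.of_nat m))%Z = inI m x.
Proof.
  apply eq_true_iff_eq. rewrite inI_true, andb_true_iff, negb_true_iff, Z.eqb_neq, Z.leb_le. lia.
Qed.

Lemma rhs_eq m v t k : galerkin_rhs m v t k =
  if inI m k then Cmult (coef k) (inner m v t k) else RtoC 0.
Proof.
  unfold galerkin_rhs. fold (inI m k). destruct (inI m k); auto.
  unfold coef, inner. f_equal.
  rewrite (fold_if_filter Cplus (RtoC 0) Cplus_0_l). unfold Csum. f_equal. f_equal.
  apply filter_ext. intros; apply filt_eq.
Qed.

Lemma cis_conj th : Cconj (cis th) = cis (- th).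
Proof. unfold cis, Cconj; simpl. rewrite cos_neg, sin_neg. auto. Qed.

Lemma rhs_sym m v t k :
  Cconj (galerkin_rhs m v t (- k)%Z) = galerkin_rhs m (fun j => Cconj (v (- j)%Z)) t k.
Proof.
  rewrite !rhs_eq, inI_opp. destruct (inI m k).
  2:{ unfold Cconj; simpl. rewrite Ropp_0; auto. }
  rewrite Cmult_conj. f_equal.
  { unfold coef, Cconj, Cmult, Ci, RtoC; simpl. rewrite opp_IZR. f_equal; ring. }
  unfold inner. rewrite Csum_conj. rewrite <- Csum_neg. apply Csum_ext_in. intros k1 _.
  replace (- k - - k1)%Z with (- (k - k1))%Z by ring. rewrite inI_opp.
  destruct (inI m (k - k1)).
  2:{ unfold Cconj; simpl. rewrite Ropp_0; auto. }
  unfold rterm. replace (- k - - k1)%Z with (- (k - k1))%Z by ring.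
  rewrite !Cmult_conj, cis_conj. f_equal. f_equal. f_equal.
  rewrite !opp_IZR. ring.
Qed.

Definition S3 m (F : Z -> Z -> Z -> C) : C :=
  Csum (map (fun k => Csum (map (fun k1 =>
     if inI m (k - k1) then F k1 (k - k1)%Z (- k)%Z else RtoC 0) (zrange m))) (zrange m)).

Lemma S3_plus m F1 F2 : S3 m (fun a b c => Cplus (F1 a b c) (F2 a b c)) = Cplus (S3 m F1) (S3 m F2).
Proof.
  unfold S3. rewrite <- Csum_plus. apply Csum_ext_in; intros k _.
  rewrite <- Csum_plus. apply Csum_ext_in; intros k1 _.
  destruct (inI m (k - k1)); auto. unfold RtoC; apply injective_projections; simpl; ring.
Qed.

Lemma S3_ext m F1 F2 : (forall a b c, (a + b + c = 0)%Z -> F1 a b c = F2 a b c) -> S3 m F1 = S3 m F2.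
Proof.
  intros H. unfold S3. apply Csum_ext_in; intros k _. apply Csum_ext_in; intros k1 _.
  destruct (inI m (k - k1)); auto. apply H. ring.
Qed.

Lemma S3_swap12 m F : S3 m F = S3 m (fun a b c => F b a c).
Proof.
  unfold S3. apply Csum_ext_in; intros k _.
  transitivity (Csum (map (fun x => if (inI m x && inI m (k - x))%bool
       then (fun y => F (k - y)%Z y (- k)%Z) (k - x)%Z else RtoC 0) (zrange m))).
  { apply Csum_ext_in; intros x Hx. apply In_zrange in Hx. rewrite Hx. simpl.
    replace (k - (k - x))%Z with x by ring. auto. }
  etransitivity.
  { apply (Csum_reindex_if (zrange m) (fun x => k - x)%Z (fun x => inI m x && inI m (k - x))%bool
          (fun y => F (k - y)%Z y (- k)%Z)).
    - apply NoDup_zrange.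
    - intros; ring.
    - intros x Hq. apply andb_true_iff in Hq as [H1 H2]. rewrite !In_zrange. auto. }
  apply Csum_ext_in; intros y Hy. apply In_zrange in Hy.
  replace (k - (k - y))%Z with y by ring. rewrite Hy, andb_true_r. auto.
Qed.

Lemma S3_swap13 m F : S3 m F = S3 m (fun a b c => F c b a).
Proof.
  unfold S3. rewrite Csum_exchange. rewrite <- Csum_neg. apply Csum_ext_in; intros K _.
  rewrite <- Csum_neg. apply Csum_ext_in; intros K1 _.
  replace (- K1 - - K)%Z with (K - K1)%Z by ring. rewrite Z.opp_involutive. auto.
Qed.

Definition Hs (v:zseq) t (a b c : Z) : C :=
  Cmult (Cmult (Cmult (cis (- (3 * IZR a * IZR b * IZR c * t))) (v a)) (v b)) (v c).

Lemma Hs_12 v t a b c : Hs v t a b c = Hs v t b a c.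
Proof. unfold Hs. replace (3 * IZR b * IZR a * IZR c * t) with (3 * IZR a * IZR b * IZR c * t) by ring. ring. Qed.
Lemma Hs_13 v t a b c : Hs v t a b c = Hs v t c b a.
Proof. unfold Hs. replace (3 * IZR c * IZR b * IZR a * t) with (3 * IZR a * IZR b * IZR c * t) by ring. ring. Qed.

Lemma S3_zero m v t : S3 m (fun a b c => Cmult (RtoC (IZR c)) (Hs v t a b c)) = RtoC 0.
Proof.
  set (Fa := fun a b c => Cmult (RtoC (IZR a)) (Hs v t a b c)).
  set (Fb := fun a b c => Cmult (RtoC (IZR b)) (Hs v t a b c)).
  set (Fc := fun a b c => Cmult (RtoC (IZR c)) (Hs v t a b c)).
  assert (Eac : S3 m Fa = S3 m Fc).
  { rewrite S3_swap13. apply S3_ext; intros. unfold Fa, Fc. rewrite <- Hs_13. auto. }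
  assert (Eab : S3 m Fa = S3 m Fb).
  { rewrite S3_swap12. apply S3_ext; intros. unfold Fa, Fb. rewrite <- Hs_12. auto. }
  assert (E0 : S3 m (fun a b c => Cplus (Fa a b c) (Cplus (Fb a b c) (Fc a b c))) = RtoC 0).
  { transitivity (S3 m (fun _ _ _ => RtoC 0)).
    - apply S3_ext; intros a b c Habc. unfold Fa, Fb, Fc.
      assert (IZR a + IZR b + IZR c = 0).
      { rewrite <- !plus_IZR, Habc. auto. }
      replace (IZR c) with (- IZR a - IZR b) by lra.
      unfold RtoC. apply injective_projections; simpl; ring.
    - unfold S3. transitivity (Csum (map (fun _ : Z => RtoC 0) (zrange m))); [|apply Csum_zero].
      apply Csum_ext_in; intros k _.
      transitivity (Csum (map (fun _ : Z => RtoC 0) (zrange m))); [|apply Csum_zero].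
      apply Csum_ext_in; intros k1 _. destruct (inI m (k - k1)); auto. }
  rewrite !S3_plus in E0. fold Fc. rewrite <- Eab, Eac in E0.
  assert (H3 : Cmult (RtoC 3) (S3 m Fc) = RtoC 0).
  { rewrite <- E0. unfold RtoC. apply injective_projections; simpl; ring. }
  apply (f_equal (Cmult (RtoC (1/3)))) in H3.
  replace (S3 m Fc) with (Cmult (RtoC (1 / 3)) (Cmult (RtoC 3) (S3 m Fc))).
  - rewrite H3. unfold RtoC; apply injective_projections; simpl; ring.
  - unfold RtoC; apply injective_projections; simpl; field.
Qed.

Ltac Cbrute := unfold Cmult, Cplus, Copp, Cminus, RtoC, Ci, cis, Cconj in *;
  apply injective_projections; simpl; ring.

Lemma rhs_vneg m v t :
  Csum (map (fun k => Cmult (galerkin_rhs m v t k) (v (- k)%Z)) (zrange m)) =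
  Cmult (Cmult (RtoC (- (1/2))) Ci) (S3 m (fun a b c => Cmult (RtoC (IZR c)) (Hs v t a b c))).
Proof.
  unfold S3. rewrite <- Csum_scal. apply Csum_ext_in; intros k Hk.
  apply In_zrange in Hk. rewrite rhs_eq, Hk. unfold inner.
  replace (Cmult (Cmult (coef k) (Csum (map (fun k1 => if inI m (k - k1) then rterm v t k k1 else RtoC 0) (zrange m)))) (v (- k)%Z))
    with (Cmult (Cmult (coef k) (v (- k)%Z)) (Csum (map (fun k1 => if inI m (k - k1) then rterm v t k k1 else RtoC 0) (zrange m)))) by ring.
  rewrite <- !Csum_scal. apply Csum_ext_in; intros k1 _.
  destruct (inI m (k - k1)).
  - unfold coef, Hs, rterm. rewrite opp_IZR.
    replace (- (3 * IZR k1 * IZR (k - k1) * - IZR k * t)) with (3 * IZR k * IZR k1 * IZR (k - k1) * t) by ring.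
    Cbrute.
  - Cbrute.
Qed.

Lemma Pdot_zero m v t :
  Csum (map (fun k => Cplus (Cmult (galerkin_rhs m v t k) (v (- k)%Z))
                             (Cmult (v k) (galerkin_rhs m v t (- k)%Z))) (zrange m)) = RtoC 0.
Proof.
  rewrite Csum_plus.
  assert (E : Csum (map (fun k => Cmult (v k) (galerkin_rhs m v t (- k)%Z)) (zrange m)) =
              Csum (map (fun k => Cmult (galerkin_rhs m v t k) (v (- k)%Z)) (zrange m))).
  { rewrite <- Csum_neg. apply Csum_ext_in; intros k _. rewrite Z.opp_involutive. ring. }
  rewrite E, rhs_vneg, S3_zero. Cbrute.
Qed.

Definition dom (T : R) := fun s : R => 0 <= s <= T.

Lemma within_lim (T t : R) : is_filter_lim (within (dom T) (locally t)) t.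
Proof. intros P HP. unfold within. apply filter_imp with P; auto. Qed.

Lemma within_to_locally {V : NormedModule R_AbsRing} (T : R) (f : R -> V) (l : R -> V) t :
  0 < t < T -> filterdiff f (within (dom T) (locally t)) l -> filterdiff f (locally t) l.
Proof.
  intros Ht [Hl Hdm].
  split; auto. intros x Hx.
  assert (Hx' : t = x) by (apply (@is_filter_lim_locally_unique R_AbsRing R_NormedModule); exact Hx).
  subst x.
  intros eps. specialize (Hdm t (within_lim T t) eps). unfold within in Hdm.
  assert (Hloc : locally t (fun s => 0 <= s <= T)).
  { apply (locally_interval _ t 0 T); simpl; try lra. intros; lra. }
  generalize (filter_and _ _ Hdm Hloc). apply filter_imp.
  intros s [H1 H2]. apply H1, H2.
Qed.

Lemma td_re_w T v v' k t : time_deriv_on T v v' -> k <> 0%Z -> 0 <= t <= T ->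
  filterdiff (fun s => fst (v s k)) (within (dom T) (locally t)) (fun h => scal h (fst (v' t k))).
Proof.
  intros Hd Hk Ht.
  eapply filterdiff_ext_lin.
  - apply (filterdiff_comp (fun s => v s k) fst); [apply (Hd k Hk t Ht)|].
    apply filterdiff_linear, is_linear_fst.
  - intros y; simpl. reflexivity.
Qed.

Lemma td_im_w T v v' k t : time_deriv_on T v v' -> k <> 0%Z -> 0 <= t <= T ->
  filterdiff (fun s => snd (v s k)) (within (dom T) (locally t)) (fun h => scal h (snd (v' t k))).
Proof.
  intros Hd Hk Ht.
  eapply filterdiff_ext_lin.
  - apply (filterdiff_comp (fun s => v s k) snd); [apply (Hd k Hk t Ht)|].
    apply filterdiff_linear, is_linear_snd.
  - intros y; simpl. reflexivity.
Qed.

Lemma wd_derive T (g : R -> R) g' t : 0 < t < T ->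
  filterdiff g (within (dom T) (locally t)) (fun h => scal h g') -> is_derive g t g'.
Proof. intros Ht H. unfold is_derive. eapply within_to_locally; eauto. Qed.

Lemma wd_cont T (g : R -> R) g' t :
  filterdiff g (within (dom T) (locally t)) (fun h => scal h g') ->
  filterlim g (within (dom T) (locally t)) (locally (g t)).
Proof.
  intros H. apply (@filterdiff_continuous_aux R_AbsRing R_NormedModule R_NormedModule _
     (within_filter _ _ _ (@filter_filter _ _ (locally_filter t)))).
  - eexists; eauto.
  - apply within_lim.
Qed.

Definition clamp (T s : R) : R := Rmax 0 (Rmin T s).

Lemma clamp_dom T s : 0 <= T -> dom T (clamp T s).
Proof. intros HT. unfold dom, clamp. split; [apply Rmax_l|]. apply Rmax_lub; auto. apply Rmin_l. Qed.

Lemma clamp_id T s : 0 <= s <= T -> clamp T s = s.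
Proof. intros H. unfold clamp. rewrite Rmin_right by lra. rewrite Rmax_right by lra. auto. Qed.

Lemma clamp_lip T a b : Rabs (clamp T a - clamp T b) <= Rabs (a - b).
Proof.
  unfold clamp, Rmax, Rmin.
  repeat (destruct Rle_dec); unfold Rabs; repeat destruct Rcase_abs; lra.
Qed.

Lemma clamp_lim T x : 0 <= T ->
  filterlim (clamp T) (locally x) (within (dom T) (locally (clamp T x))).
Proof.
  intros HT P HP. unfold within in HP. unfold filtermap.
  destruct HP as [eps Heps]. exists eps. intros y Hy.
  apply Heps.
  - unfold ball in *; simpl in *; unfold AbsRing_ball in *; simpl in *.
    unfold minus, plus, opp in *; simpl in *.
    eapply Rle_lt_trans; [apply clamp_lip|]. auto.
  - apply clamp_dom; auto.
Qed.

Lemma clamp_cont (T : R) (g : R -> R) x : 0 <= T ->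
  (forall t, 0 <= t <= T -> filterlim g (within (dom T) (locally t)) (locally (g t))) ->
  continuous (fun s => g (clamp T s)) x.
Proof.
  intros HT Hg. unfold continuous.
  eapply filterlim_comp; [apply clamp_lim; auto|]. apply Hg. apply clamp_dom; auto.
Qed.


Lemma der_plus f g df dg x : is_derive f x df -> is_derive g x dg ->
  is_derive (fun s => f s + g s) x (df + dg).
Proof. intros. apply (is_derive_plus f g x df dg); auto. Qed.
Lemma der_minus f g df dg x : is_derive f x df -> is_derive g x dg ->
  is_derive (fun s => f s - g s) x (df - dg).
Proof. intros. apply (is_derive_minus f g x df dg); auto. Qed.
Lemma der_mult f g df dg x : is_derive f x df -> is_derive g x dg ->
  is_derive (fun s => f s * g s) x (df * g x + f x * dg).
Proof. intros. apply (is_derive_mult f g x df dg); auto. intros; apply Rmult_comm. Qed.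

Lemma der_Rsum {B} (F : B -> R -> R) (F' : B -> R) l x :
  (forall k, In k l -> is_derive (F k) x (F' k)) ->
  is_derive (fun s => Rsum (map (fun k => F k s) l)) x (Rsum (map F' l)).
Proof.
  induction l as [|a l IH]; intros H; unfold Rsum in *; simpl.
  - apply (is_derive_const 0).
  - apply der_plus. apply H; left; auto. apply IH; intros; apply H; right; auto.
Qed.

Lemma lim_plus {F : (R -> Prop) -> Prop} {FF : Filter F} f g a b :
  filterlim f F (locally a) -> filterlim g F (locally b) ->
  filterlim (fun s => f s + g s) F (locally (a + b)).
Proof. intros. eapply filterlim_comp_2; eauto. apply (filterlim_plus (V:=R_NormedModule)). Qed.
Lemma lim_mult {F : (R -> Prop) -> Prop} {FF : Filter F} f g a b :
  filterlim f F (locally a) -> filterlim g F (locally b) ->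
  filterlim (fun s => f s * g s) F (locally (a * b)).
Proof. intros. eapply filterlim_comp_2; eauto. apply (filterlim_mult (K:=R_AbsRing)). Qed.
Lemma lim_opp {F : (R -> Prop) -> Prop} {FF : Filter F} f a :
  filterlim f F (locally a) -> filterlim (fun s => - f s) F (locally (- a)).
Proof. intros. eapply filterlim_comp; eauto. apply (filterlim_opp (V:=R_NormedModule)). Qed.
Lemma lim_minus {F : (R -> Prop) -> Prop} {FF : Filter F} f g a b :
  filterlim f F (locally a) -> filterlim g F (locally b) ->
  filterlim (fun s => f s - g s) F (locally (a - b)).
Proof. intros. apply lim_plus; auto. apply lim_opp; auto. Qed.
Lemma lim_const {F : (R -> Prop) -> Prop} {FF : Filter F} (a : R) :
  filterlim (fun _ => a) F (locally a).
Proof. apply filterlim_const. Qed.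

Lemma lim_Rsum {F : (R -> Prop) -> Prop} {FF : Filter F} {B} (G : B -> R -> R) l x :
  (forall k, In k l -> filterlim (G k) F (locally (G k x))) ->
  filterlim (fun s => Rsum (map (fun k => G k s) l)) F (locally (Rsum (map (fun k => G k x) l))).
Proof.
  induction l as [|a l IH]; intros H; unfold Rsum in *; simpl.
  - apply lim_const.
  - apply lim_plus. apply H; left; auto. apply IH; intros; apply H; right; auto.
Qed.

Lemma mvt0 (T : R) (g g' : R -> R) t : 0 < t <= T ->
  (forall s, 0 <= s <= T -> filterlim g (within (dom T) (locally s)) (locally (g s))) ->
  (forall s, 0 < s < T -> is_derive g s (g' s)) ->
  exists c, 0 <= c <= t /\ g t - g 0 = g' c * t.
Proof.
  intros Ht Hc Hd.
  destruct (MVT_gen (fun s => g (clamp T s)) 0 t g') as [c [Hc1 Hc2]].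
  - rewrite Rmin_left, Rmax_right by lra. intros x Hx.
    apply (is_derive_ext_loc g). 2: apply Hd; lra.
    apply (locally_interval _ x 0 T); simpl; try lra. intros y Hy1 Hy2.
    rewrite clamp_id; auto; lra.
  - intros x _. apply continuity_pt_filterlim. apply (clamp_cont T g x); [lra|auto].
  - rewrite Rmin_left, Rmax_right in Hc1 by lra. exists c. split; auto.
    rewrite !clamp_id in Hc2 by lra. lra.
Qed.

Lemma Cmod_cis th : Cmod (cis th) = 1.
Proof.
  unfold Cmod, cis. cbn [fst snd].
  replace (cos th ^ 2 + sin th ^ 2) with 1. apply sqrt_1.
  generalize (sin2_cos2 th). unfold Rsqr. intros H. nra.
Qed.

Lemma Cmod_coef k : Cmod (coef k) = Rabs (IZR k) / 2.
Proof.
  unfold coef. rewrite !Cmod_mult, !Cmod_R.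
  assert (Cmod Ci = 1).
  { unfold Cmod, Ci. cbn [fst snd]. replace (0 ^ 2 + 1 ^ 2) with 1 by ring. apply sqrt_1. }
  rewrite H. rewrite Rabs_right by lra. field.
Qed.

Lemma inI_bound m k : inI m k = true -> Rabs (IZR k) <= INR m.
Proof.
  intros H. apply inI_true in H. rewrite <- abs_IZR, INR_IZR_INZ. apply IZR_le. lia.
Qed.

Lemma Csum_minus {B} (a b : B -> C) l :
  Cminus (Csum (map a l)) (Csum (map b l)) = Csum (map (fun x => Cminus (a x) (b x)) l).
Proof.
  induction l; unfold Csum in *; cbn [map fold_right] in *.
  - Cbrute.
  - rewrite <- IHl. Cbrute.
Qed.

Lemma Cmod_C0 : Cmod (RtoC 0) = 0.
Proof. apply Cmod_0. Qed.

Lemma rhs_lip m u w t k M d : inI m k = true -> 0 <= M -> 0 <= d ->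
  (forall j, inI m j = true -> Cmod (u j) <= M /\ Cmod (w j) <= M /\ Cmod (Cminus (u j) (w j)) <= d) ->
  Cmod (Cminus (galerkin_rhs m u t k) (galerkin_rhs m w t k)) <= 2 * INR m * INR m * M * d.
Proof.
  intros Hk HM Hd Hb. rewrite !rhs_eq, Hk. unfold inner.
  replace (Cminus (Cmult (coef k) (Csum (map (fun k1 => if inI m (k - k1) then rterm u t k k1 else RtoC 0) (zrange m))))
                  (Cmult (coef k) (Csum (map (fun k1 => if inI m (k - k1) then rterm w t k k1 else RtoC 0) (zrange m)))))
    with (Cmult (coef k) (Cminus (Csum (map (fun k1 => if inI m (k - k1) then rterm u t k k1 else RtoC 0) (zrange m)))
                  (Csum (map (fun k1 => if inI m (k - k1) then rterm w t k k1 else RtoC 0) (zrange m))))) by ring.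
  rewrite Csum_minus, Cmod_mult, Cmod_coef.
  assert (Hs : Cmod (Csum (map (fun x => Cminus (if inI m (k - x) then rterm u t k x else RtoC 0)
                                         (if inI m (k - x) then rterm w t k x else RtoC 0)) (zrange m)))
              <= INR (length (zrange m)) * (2 * M * d)).
  { eapply Rle_trans; [apply Cmod_Csum|]. apply Rsum_const_le. intros x Hx.
    apply In_zrange in Hx. destruct (inI m (k - x)) eqn:E.
    - destruct (Hb x Hx) as [H1 [H2 H3]]. destruct (Hb (k - x)%Z E) as [H4 [H5 H6]].
      unfold rterm.
      replace (Cminus (Cmult (Cmult (cis (3 * IZR k * IZR x * IZR (k - x) * t)) (u x)) (u (k - x)%Z))
                      (Cmult (Cmult (cis (3 * IZR k * IZR x * IZR (k - x) * t)) (w x)) (w (k - x)%Z)))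
        with (Cmult (cis (3 * IZR k * IZR x * IZR (k - x) * t))
               (Cplus (Cmult (u x) (Cminus (u (k - x)%Z) (w (k - x)%Z))) (Cmult (Cminus (u x) (w x)) (w (k - x)%Z)))) by ring.
      rewrite Cmod_mult, Cmod_cis.
      eapply Rle_trans; [|apply Req_le; apply Rmult_1_l]. apply Rmult_le_compat_l; [lra|].
      eapply Rle_trans; [apply Cmod_triangle|]. rewrite !Cmod_mult.
      assert (0 <= Cmod (u x)) by apply Cmod_ge_0.
      assert (0 <= Cmod (Cminus (u (k - x)%Z) (w (k - x)%Z))) by apply Cmod_ge_0.
      assert (0 <= Cmod (Cminus (u x) (w x))) by apply Cmod_ge_0.
      assert (0 <= Cmod (w (k - x)%Z)) by apply Cmod_ge_0.
      nra.
    - replace (Cminus (RtoC 0) (RtoC 0)) with (RtoC 0) by ring. rewrite Cmod_C0. nra. }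
  rewrite length_zrange, mult_INR in Hs. simpl INR in Hs.
  assert (Hkb := inI_bound m k Hk).
  assert (0 <= Rabs (IZR k)) by apply Rabs_pos.
  assert (0 <= Cmod (Csum (map (fun x => Cminus (if inI m (k - x) then rterm u t k x else RtoC 0)
                                         (if inI m (k - x) then rterm w t k x else RtoC 0)) (zrange m)))) by apply Cmod_ge_0.
  assert (0 <= M * d) by nra.
  assert (0 <= INR m) by apply pos_INR.
  apply Rle_trans with (Rabs (IZR k) / 2 * ((1+1) * INR m * (2 * M * d))).
  - apply Rmult_le_compat_l; [lra|auto].
  - nra.
Qed.

Definition Esum m (v : zseq) := Rsum (map (fun j => Cmod (v j) ^ 2) (zrange m)).

Lemma Esum_nonneg m v : 0 <= Esum m v.
Proof. apply Rsum_nonneg. intros; apply pow2_ge_0. Qed.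

Lemma rhs_mag m v t k : Cmod (galerkin_rhs m v t k) <= Rabs (IZR k) / 2 * Esum m v.
Proof.
  assert (HE := Esum_nonneg m v). assert (0 <= Rabs (IZR k)) by apply Rabs_pos.
  rewrite rhs_eq. destruct (inI m k) eqn:Hk.
  2:{ rewrite Cmod_C0. nra. }
  rewrite Cmod_mult, Cmod_coef. apply Rmult_le_compat_l; [lra|].
  unfold inner. eapply Rle_trans; [apply Cmod_Csum|].
  eapply Rle_trans.
  { apply (Rsum_le _ (fun x => (if inI m (k - x) then Cmod (v x) ^ 2 else 0) / 2 +
                               (if inI m (k - x) then Cmod (v (k - x)%Z) ^ 2 else 0) / 2)).
    intros x _. destruct (inI m (k - x)).
    - unfold rterm. rewrite !Cmod_mult, Cmod_cis.
      generalize (pow2_ge_0 (Cmod (v x) - Cmod (v (k - x)%Z))). intros. lra.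
    - rewrite Cmod_C0. lra. }
  rewrite Rsum_plus.
  assert (H1 : Rsum (map (fun x => (if inI m (k - x) then Cmod (v x) ^ 2 else 0) / 2) (zrange m)) <= Esum m v / 2).
  { unfold Rdiv. rewrite (Rsum_ext_in _ (fun x => / 2 * (if inI m (k - x) then Cmod (v x) ^ 2 else 0)))
      by (intros; ring).
    rewrite Rsum_scal. unfold Esum. rewrite (Rmult_comm _ (/2)). apply Rmult_le_compat_l; [lra|].
    apply Rsum_le. intros x _. destruct (inI m (k - x)); [lra|apply pow2_ge_0]. }
  assert (H2 : Rsum (map (fun x => (if inI m (k - x) then Cmod (v (k - x)%Z) ^ 2 else 0) / 2) (zrange m)) <= Esum m v / 2).
  { unfold Rdiv. rewrite (Rsum_ext_in _ (fun x => / 2 * (if (inI m x && inI m (k - x))%bool then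
                                 (fun y => Cmod (v y) ^ 2) (k - x)%Z else 0))).
    2:{ intros x Hx. apply In_zrange in Hx. rewrite Hx. simpl. ring. }
    rewrite Rsum_scal. unfold Esum. rewrite (Rmult_comm _ (/2)). apply Rmult_le_compat_l; [lra|].
    rewrite (Rsum_reindex_if (zrange m) (fun x => k - x)%Z (fun x => inI m x && inI m (k - x))%bool
               (fun y => Cmod (v y) ^ 2)).
    - apply Rsum_le. intros x _. destruct (_ && _)%bool; [lra|apply pow2_ge_0].
    - apply NoDup_zrange.
    - intros; ring.
    - intros x Hq. apply andb_true_iff in Hq as [Ha Hb]. rewrite !In_zrange. auto. }
  lra.
Qed.

Lemma Cmod_sq (z : C) : Cmod z ^ 2 = fst z * fst z + snd z * snd z.
Proof.
  unfold Cmod. rewrite pow2_sqrt. ring. nra.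
Qed.

Lemma Cmod_le_abs (z : C) : Cmod z <= Rabs (fst z) + Rabs (snd z).
Proof.
  assert (H0 : 0 <= Cmod z) by apply Cmod_ge_0.
  assert (Ha := Rabs_pos (fst z)). assert (Hb := Rabs_pos (snd z)).
  apply Rsqr_incr_0_var; [|lra]. unfold Rsqr.
  replace (Cmod z * Cmod z) with (Cmod z ^ 2) by ring. rewrite Cmod_sq.
  assert (E1 : fst z * fst z = Rabs (fst z) * Rabs (fst z)) by (unfold Rabs; destruct Rcase_abs; ring).
  assert (E2 : snd z * snd z = Rabs (snd z) * Rabs (snd z)) by (unfold Rabs; destruct Rcase_abs; ring).
  rewrite E1, E2. nra.
Qed.

Lemma cs2 a b c d : a * c + b * d <= sqrt (a * a + b * b) * sqrt (c * c + d * d).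
Proof.
  rewrite <- sqrt_mult by nra.
  destruct (Rle_dec (a * c + b * d) 0). { assert (0 <= sqrt ((a * a + b * b) * (c * c + d * d))) by apply sqrt_pos. lra. }
  apply Rsqr_incr_0_var; [|apply sqrt_pos]. rewrite Rsqr_sqrt by nra. unfold Rsqr.
  generalize (pow2_ge_0 (a * d - b * c)). intros. nra.
Qed.

Lemma Cmod_sqrt (z : C) : Cmod z = sqrt (fst z * fst z + snd z * snd z).
Proof. unfold Cmod. f_equal. ring. Qed.

Lemma bounded_on (T : R) (g : R -> R) : 0 <= T ->
  (forall s, 0 <= s <= T -> filterlim g (within (dom T) (locally s)) (locally (g s))) ->
  exists B, forall s, 0 <= s <= T -> Rabs (g s) <= B.
Proof.
  intros HT Hc.
  assert (Hc1 : forall s, 0 <= s <= T -> continuity_pt (fun s => g (clamp T s)) s).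
  { intros s _. apply continuity_pt_filterlim, clamp_cont; auto. }
  assert (Hc2 : forall s, 0 <= s <= T -> continuity_pt (fun s => - g (clamp T s)) s).
  { intros s Hs. apply continuity_pt_opp, Hc1; auto. }
  destruct (continuity_ab_maj _ 0 T HT Hc1) as [x1 [H1 _]].
  destruct (continuity_ab_maj _ 0 T HT Hc2) as [x2 [H2 _]].
  exists (Rmax (g (clamp T x1)) (- g (clamp T x2))).
  intros s Hs. specialize (H1 s Hs). specialize (H2 s Hs). rewrite clamp_id in H1, H2 by auto.
  unfold Rabs. destruct Rcase_abs.
  - eapply Rle_trans; [|apply Rmax_r]. lra.
  - eapply Rle_trans; [|apply Rmax_l]. lra.
Qed.

Lemma fin_bound {B} (l : list B) (P : B -> R -> Prop) :
  (forall x, In x l -> exists b, forall b', b <= b' -> P x b') ->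
  exists M, 0 <= M /\ forall x, In x l -> forall M', M <= M' -> P x M'.
Proof.
  induction l as [|a l IH]; intros H.
  - exists 0. split; [lra|]. intros x [].
  - destruct (H a (or_introl eq_refl)) as [b Hb].
    destruct IH as [M [HM1 HM2]]. { intros; apply H; right; auto. }
    exists (Rmax b M). split. { eapply Rle_trans; [apply HM1|apply Rmax_r]. }
    intros x [<-|Hx] M' HM'.
    + apply Hb. apply Rle_trans with (Rmax b M); [apply Rmax_l|]; auto.
    + apply HM2; auto. apply Rle_trans with (Rmax b M); [apply Rmax_r|]; auto.
Qed.

Lemma der_eq (f : R -> R) (x a b : R) : is_derive f x a -> a = b -> is_derive f x b.
Proof. intros H <-; auto. Qed.

Lemma lim_exp_lin {F : (R -> Prop) -> Prop} {FF : Filter F} L x :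
  filterlim (fun s => s) F (locally x) ->
  filterlim (fun s => exp (- L * s)) F (locally (exp (- L * x))).
Proof.
  intros H. apply (filterlim_comp R R R (fun s => s) (fun s => exp (- L * s)) F (locally x)); [apply H|].
  apply (proj1 (continuity_pt_filterlim (fun s => exp (- L * s)) x)). apply derivable_continuous_pt.
  apply derivable_pt_comp. apply derivable_pt_mult. apply derivable_pt_const. apply derivable_pt_id.
  apply derivable_pt_exp.
Qed.

Definition Rp (v : R -> zseq) k s := fst (v s k).
Definition Ip (v : R -> zseq) k s := snd (v s k).

Lemma zr_nz m k : In k (zrange m) -> k <> 0%Z.
Proof. intros H. apply In_zrange, inI_true in H. lia. Qed.

Lemma lim_id_w T t : filterlim (fun s => s) (within (dom T) (locally t)) (locally t).
Proof. intros P HP. unfold filtermap, within. apply filter_imp with P; auto. Qed.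

Lemma Rp_lim T v v' k s : time_deriv_on T v v' -> k <> 0%Z -> 0 <= s <= T ->
  filterlim (Rp v k) (within (dom T) (locally s)) (locally (Rp v k s)).
Proof. intros. eapply wd_cont. apply (td_re_w T v v'); auto. Qed.
Lemma Ip_lim T v v' k s : time_deriv_on T v v' -> k <> 0%Z -> 0 <= s <= T ->
  filterlim (Ip v k) (within (dom T) (locally s)) (locally (Ip v k s)).
Proof. intros. eapply wd_cont. apply (td_im_w T v v'); auto. Qed.
Lemma Rp_der T v v' k s : time_deriv_on T v v' -> k <> 0%Z -> 0 < s < T ->
  is_derive (Rp v k) s (Rp v' k s).
Proof. intros. eapply wd_derive; eauto. apply (td_re_w T v v'); auto; lra. Qed.
Lemma Ip_der T v v' k s : time_deriv_on T v v' -> k <> 0%Z -> 0 < s < T ->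
  is_derive (Ip v k) s (Ip v' k s).
Proof. intros. eapply wd_derive; eauto. apply (td_im_w T v v'); auto; lra. Qed.

Lemma vbound m T v v' : 0 < T -> time_deriv_on T v v' ->
  exists M, 0 <= M /\ forall j, In j (zrange m) -> forall s, 0 <= s <= T -> Cmod (v s j) <= M.
Proof.
  intros HT Hd.
  destruct (fin_bound (zrange m) (fun j b => forall s, 0 <= s <= T -> Cmod (v s j) <= b)) as [M [HM HMb]].
  - intros j Hj. apply zr_nz in Hj.
    destruct (bounded_on T (Rp v j)) as [B1 HB1]; [lra| intros; apply (Rp_lim T v v'); auto|].
    destruct (bounded_on T (Ip v j)) as [B2 HB2]; [lra| intros; apply (Ip_lim T v v'); auto|].
    exists (B1 + B2). intros b' Hb' s Hs. eapply Rle_trans; [apply Cmod_le_abs|].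
    specialize (HB1 s Hs). specialize (HB2 s Hs). unfold Rp, Ip in *. lra.
  - exists M. split; auto. intros j Hj s Hs. apply (HMb j Hj M (Rle_refl _)); auto.
Qed.

Definition ddk (v : R -> zseq) k s :=
  (Rp v k s - Rp v (- k)%Z s) * (Rp v k s - Rp v (- k)%Z s) +
  (Ip v k s + Ip v (- k)%Z s) * (Ip v k s + Ip v (- k)%Z s).
Definition Dd m v s := Rsum (map (fun k => ddk v k s) (zrange m)).
Definition Dd' m (v v' : R -> zseq) s := Rsum (map (fun k =>
  2 * (Rp v k s - Rp v (- k)%Z s) * (Rp v' k s - Rp v' (- k)%Z s) +
  2 * (Ip v k s + Ip v (- k)%Z s) * (Ip v' k s + Ip v' (- k)%Z s)) (zrange m)).

Lemma Dd_nonneg m v s : 0 <= Dd m v s.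
Proof. apply Rsum_nonneg. intros k _. unfold ddk. apply Rplus_le_le_0_compat; apply Rle_0_sqr. Qed.

Lemma ddk_le m v k s : In k (zrange m) -> ddk v k s <= Dd m v s.
Proof. intros Hk. apply (Rsum_ge_term (fun k => ddk v k s)); auto. intros; unfold ddk; apply Rplus_le_le_0_compat; apply Rle_0_sqr. Qed.

Lemma Dd_key m T v v' M c :
  0 <= M -> (forall j, In j (zrange m) -> forall s, 0 <= s <= T -> Cmod (v s j) <= M) ->
  (forall k, k <> 0%Z -> forall s, 0 <= s <= T -> v' s k = galerkin_rhs m (v s) s k) ->
  0 <= c <= T ->
  Dd' m v v' c <= 8 * INR m * INR m * INR m * M * Dd m v c.
Proof.
  intros HM HMb Hrhs Hc.
  set (u := v c). set (w := fun j => Cconj (u (- j)%Z)).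
  set (del := sqrt (Dd m v c)).
  assert (Hdel : 0 <= del) by apply sqrt_pos.
  assert (Hdiff : forall j, In j (zrange m) -> Cmod (Cminus (u j) (w j)) <= del).
  { intros j Hj. rewrite Cmod_sqrt. apply sqrt_le_1_alt.
    eapply Rle_trans; [|apply (ddk_le m v j c Hj)]. unfold ddk, Rp, Ip, w, u, Cminus, Cconj, Cplus, Copp.
    simpl. lra. }
  assert (Hlip : forall k, In k (zrange m) ->
            Cmod (Cminus (galerkin_rhs m u c k) (galerkin_rhs m w c k)) <= 2 * INR m * INR m * M * del).
  { intros k Hk. apply rhs_lip; auto. apply In_zrange; auto.
    intros j Hj. apply In_zrange in Hj. split; [|split].
    - apply HMb; auto.
    - unfold w. rewrite Cmod_conj. apply HMb; auto. apply zrange_opp; auto.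
    - apply Hdiff; auto. }
  unfold Dd'.
  eapply Rle_trans.
  { apply (Rsum_const_le _ _ (2 * del * (2 * INR m * INR m * M * del))).
    intros k Hk.
    assert (Hk' := zrange_opp m k Hk).
    assert (E1 : Rp v' k c - Rp v' (- k)%Z c = fst (Cminus (galerkin_rhs m u c k) (galerkin_rhs m w c k))).
    { unfold w. rewrite <- rhs_sym. unfold Rp. rewrite !Hrhs by (try apply (zr_nz m); auto).
      unfold Cminus, Cconj, Cplus, Copp. simpl. unfold u. ring. }
    assert (E2 : Ip v' k c + Ip v' (- k)%Z c = snd (Cminus (galerkin_rhs m u c k) (galerkin_rhs m w c k))).
    { unfold w. rewrite <- rhs_sym. unfold Ip. rewrite !Hrhs by (try apply (zr_nz m); auto).
      unfold Cminus, Cconj, Cplus, Copp. simpl. unfold u. ring. }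
    assert (E3 : Rp v k c - Rp v (- k)%Z c = fst (Cminus (u k) (w k))).
    { unfold Rp, w, u, Cminus, Cconj, Cplus, Copp. simpl. ring. }
    assert (E4 : Ip v k c + Ip v (- k)%Z c = snd (Cminus (u k) (w k))).
    { unfold Ip, w, u, Cminus, Cconj, Cplus, Copp. simpl. ring. }
    rewrite E1, E2, E3, E4.
    set (d := Cminus (u k) (w k)). set (e := Cminus (galerkin_rhs m u c k) (galerkin_rhs m w c k)).
    assert (Hcs := cs2 (fst d) (snd d) (fst e) (snd e)).
    rewrite <- !Cmod_sqrt in Hcs.
    assert (Hd1 : Cmod d <= del) by (apply Hdiff; auto).
    assert (He1 : Cmod e <= 2 * INR m * INR m * M * del) by (apply Hlip; auto).
    assert (0 <= Cmod d) by apply Cmod_ge_0. assert (0 <= Cmod e) by apply Cmod_ge_0.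
    assert (Cmod d * Cmod e <= del * (2 * INR m * INR m * M * del)).
    { apply Rmult_le_compat; auto. }
    nra. }
  rewrite length_zrange, mult_INR. simpl INR.
  assert (Hsq : del * del = Dd m v c) by (apply sqrt_sqrt, Dd_nonneg).
  rewrite <- Hsq. apply Req_le. ring.
Qed.

Lemma Rsum_zero {B} (l : list B) : Rsum (map (fun _ => 0) l) = 0.
Proof. induction l; unfold Rsum in *; simpl; auto. rewrite IHl; ring. Qed.

Lemma der_explin L s : is_derive (fun s => exp (- L * s)) s (- L * exp (- L * s)).
Proof. auto_derive; auto. ring. Qed.

Lemma Dd_lim m T v v' s : time_deriv_on T v v' -> 0 <= s <= T ->
  filterlim (Dd m v) (within (dom T) (locally s)) (locally (Dd m v s)).
Proof.
  intros Hd Hs. unfold Dd.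
  apply (lim_Rsum (fun k s => ddk v k s)). intros k Hk.
  assert (H1 := zr_nz m k Hk). assert (H2 := zr_nz m _ (zrange_opp m k Hk)).
  assert (A1 := Rp_lim T v v' k s Hd H1 Hs). assert (A2 := Rp_lim T v v' _ s Hd H2 Hs).
  assert (A3 := Ip_lim T v v' k s Hd H1 Hs). assert (A4 := Ip_lim T v v' _ s Hd H2 Hs).
  unfold ddk. apply lim_plus; apply lim_mult.
  - apply lim_minus; auto.
  - apply lim_minus; auto.
  - apply lim_plus; auto.
  - apply lim_plus; auto.
Qed.

Lemma Dd_der m T v v' s : time_deriv_on T v v' -> 0 < s < T ->
  is_derive (Dd m v) s (Dd' m v v' s).
Proof.
  intros Hd Hs. unfold Dd, Dd'.
  eapply der_eq.
  { apply (der_Rsum (fun k s => ddk v k s)). intros k Hk.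
    assert (H1 := zr_nz m k Hk). assert (H2 := zr_nz m _ (zrange_opp m k Hk)).
    assert (A1 := Rp_der T v v' k s Hd H1 Hs). assert (A2 := Rp_der T v v' _ s Hd H2 Hs).
    assert (A3 := Ip_der T v v' k s Hd H1 Hs). assert (A4 := Ip_der T v v' _ s Hd H2 Hs).
    unfold ddk. apply der_plus; apply der_mult.
    - apply der_minus; eauto.
    - apply der_minus; eauto.
    - apply der_plus; eauto.
    - apply der_plus; eauto. }
  apply Rsum_ext_in. intros k _. ring.
Qed.

Lemma prod_nonpos a b : 0 <= a -> b <= 0 -> a * b <= 0.
Proof. intros. nra. Qed.

Lemma reality m T v v' :
  0 < T -> time_deriv_on T v v' ->
  (forall k, k <> 0%Z -> forall s, 0 <= s <= T -> v' s k = galerkin_rhs m (v s) s k) ->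
  (forall k, In k (zrange m) -> v 0 (- k)%Z = Cconj (v 0 k)) ->
  forall t, 0 <= t <= T -> Dd m v t = 0.
Proof.
  intros HT Hd Hrhs H0 t Ht.
  destruct (vbound m T v v' HT Hd) as [M [HM HMb]].
  set (L := 8 * INR m * INR m * INR m * M).
  assert (HD0 : Dd m v 0 = 0).
  { unfold Dd. transitivity (Rsum (map (fun _ : Z => 0) (zrange m))); [|apply Rsum_zero].
    apply Rsum_ext_in. intros k Hk.
    unfold ddk, Rp, Ip. rewrite H0; auto. unfold Cconj; simpl. ring. }
  destruct (Req_dec t 0) as [->|Ht0]; auto.
  destruct (mvt0 T (fun s => Dd m v s * exp (- L * s))
             (fun s => Dd' m v v' s * exp (- L * s) + Dd m v s * (- L * exp (- L * s))) t)
    as [c [Hc Heq]].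
  - lra.
  - intros s Hs. apply lim_mult. apply (Dd_lim m T v v'); auto. apply lim_exp_lin, lim_id_w.
  - intros s Hs. eapply der_eq.
    + apply (der_mult (Dd m v) (fun s => exp (- L * s))).
      * apply (Dd_der m T v v'); auto.
      * apply der_explin.
    + ring.
  - assert (Hk := Dd_key m T v v' M c HM HMb Hrhs ltac:(lra)). fold L in Hk.
    assert (Hex := exp_pos (- L * c)). assert (Hext := exp_pos (- L * t)).
    rewrite HD0 in Heq.
    set (g' := Dd' m v v' c * exp (- L * c) + Dd m v c * (- L * exp (- L * c))) in Heq.
    assert (Hg : g' = exp (- L * c) * (Dd' m v v' c - L * Dd m v c)) by (unfold g'; ring).
    assert (Hg0 : g' <= 0).
    { rewrite Hg. apply prod_nonpos; lra. }
    assert (Hneg : Dd m v t * exp (- L * t) <= 0).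
    { replace (Dd m v t * exp (- L * t)) with (t * g') by lra. apply prod_nonpos; lra. }
    assert (H1 := Dd_nonneg m v t).
    destruct (Rle_lt_or_eq_dec 0 (Dd m v t) H1) as [Hp|Hz]; auto.
    assert (0 < Dd m v t * exp (- L * t)) by (apply Rmult_lt_0_compat; auto). lra.
Qed.

Definition Pr m (v : R -> zseq) s :=
  Rsum (map (fun k => Rp v k s * Rp v (- k)%Z s - Ip v k s * Ip v (- k)%Z s) (zrange m)).
Definition Pr' m (v v' : R -> zseq) s :=
  Rsum (map (fun k => (Rp v' k s * Rp v (- k)%Z s + Rp v k s * Rp v' (- k)%Z s) -
                      (Ip v' k s * Ip v (- k)%Z s + Ip v k s * Ip v' (- k)%Z s)) (zrange m)).

Lemma Pr_lim m T v v' s : time_deriv_on T v v' -> 0 <= s <= T ->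
  filterlim (Pr m v) (within (dom T) (locally s)) (locally (Pr m v s)).
Proof.
  intros Hd Hs. unfold Pr.
  apply (lim_Rsum (fun k s => Rp v k s * Rp v (- k)%Z s - Ip v k s * Ip v (- k)%Z s)). intros k Hk.
  assert (H1 := zr_nz m k Hk). assert (H2 := zr_nz m _ (zrange_opp m k Hk)).
  assert (A1 := Rp_lim T v v' k s Hd H1 Hs). assert (A2 := Rp_lim T v v' _ s Hd H2 Hs).
  assert (A3 := Ip_lim T v v' k s Hd H1 Hs). assert (A4 := Ip_lim T v v' _ s Hd H2 Hs).
  apply lim_minus; apply lim_mult; auto.
Qed.

Lemma Pr_der m T v v' s : time_deriv_on T v v' -> 0 < s < T ->
  is_derive (Pr m v) s (Pr' m v v' s).
Proof.
  intros Hd Hs. unfold Pr, Pr'.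
  eapply der_eq.
  { apply (der_Rsum (fun k s => Rp v k s * Rp v (- k)%Z s - Ip v k s * Ip v (- k)%Z s)). intros k Hk.
    assert (H1 := zr_nz m k Hk). assert (H2 := zr_nz m _ (zrange_opp m k Hk)).
    assert (A1 := Rp_der T v v' k s Hd H1 Hs). assert (A2 := Rp_der T v v' _ s Hd H2 Hs).
    assert (A3 := Ip_der T v v' k s Hd H1 Hs). assert (A4 := Ip_der T v v' _ s Hd H2 Hs).
    apply der_minus; apply der_mult; eauto. }
  apply Rsum_ext_in. intros k _. ring.
Qed.

Lemma Pr'_zero m T v v' c :
  (forall k, k <> 0%Z -> forall s, 0 <= s <= T -> v' s k = galerkin_rhs m (v s) s k) ->
  0 <= c <= T -> Pr' m v v' c = 0.
Proof.
  intros Hrhs Hc.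
  transitivity (fst (Csum (map (fun k => Cplus (Cmult (galerkin_rhs m (v c) c k) (v c (- k)%Z))
                             (Cmult (v c k) (galerkin_rhs m (v c) c (- k)%Z))) (zrange m)))).
  - rewrite Re_Csum. unfold Pr'. apply Rsum_ext_in. intros k Hk.
    assert (H1 := zr_nz m k Hk). assert (H2 := zr_nz m _ (zrange_opp m k Hk)).
    unfold Rp, Ip. rewrite !Hrhs by auto. simpl. ring.
  - rewrite Pdot_zero. auto.
Qed.

Lemma sq0 a b : a * a + b * b = 0 -> a = 0 /\ b = 0.
Proof. intros. split; nra. Qed.

Lemma Esum_Pr m v s : Dd m v s = 0 -> Esum m (v s) = Pr m v s.
Proof.
  intros HD. unfold Esum, Pr. apply Rsum_ext_in. intros k Hk.
  assert (Hle := ddk_le m v k s Hk). assert (Hnn : 0 <= ddk v k s).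
  { unfold ddk. apply Rplus_le_le_0_compat; apply Rle_0_sqr. }
  assert (Hz : ddk v k s = 0) by lra. unfold ddk in Hz. apply sq0 in Hz as [Ha Hb].
  rewrite Cmod_sq. unfold Rp, Ip in *.
  replace (fst (v s (- k)%Z)) with (fst (v s k)) by lra.
  replace (snd (v s (- k)%Z)) with (- snd (v s k)) by lra. ring.
Qed.

Lemma conservation m T v v' :
  0 < T -> time_deriv_on T v v' ->
  (forall k, k <> 0%Z -> forall s, 0 <= s <= T -> v' s k = galerkin_rhs m (v s) s k) ->
  (forall k, In k (zrange m) -> v 0 (- k)%Z = Cconj (v 0 k)) ->
  forall t, 0 <= t <= T -> Esum m (v t) = Esum m (v 0).
Proof.
  intros HT Hd Hrhs H0 t Ht.
  rewrite !Esum_Pr by (apply (reality m T v v'); auto; lra).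
  destruct (Req_dec t 0) as [->|Ht0]; auto.
  destruct (mvt0 T (Pr m v) (Pr' m v v') t) as [c [Hc Heq]].
  - lra.
  - intros s Hs. apply (Pr_lim m T v v'); auto.
  - intros s Hs. apply (Pr_der m T v v'); auto.
  - rewrite (Pr'_zero m T v v' c) in Heq; auto; try lra.
Qed.

Lemma Rpower_one y : Rpower 1 y = 1.
Proof. unfold Rpower. rewrite ln_1, Rmult_0_r, exp_0. auto. Qed.

Lemma Rsum_app l1 l2 : Rsum (l1 ++ l2) = Rsum l1 + Rsum l2.
Proof. induction l1; unfold Rsum in *; simpl. ring. rewrite IHl1. ring. Qed.

Lemma Rsum_snoc {B} (f : B -> R) l x : Rsum (map f (l ++ x :: nil)) = Rsum (map f l) + f x.
Proof. rewrite map_app, Rsum_app. unfold Rsum at 2. simpl. ring. Qed.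

Lemma pstep q x : 1 < q -> 1 <= x ->
  Rpower (x + 1) (- q) <= (Rpower x (1 - q) - Rpower (x + 1) (1 - q)) / (q - 1).
Proof.
  intros Hq Hx.
  destruct (MVT_cor2 (fun y => Rpower y (1 - q)) (fun y => (1 - q) * Rpower y (1 - q - 1)) x (x + 1))
    as [c [Hc1 Hc2]].
  - lra.
  - intros c Hc. apply derivable_pt_lim_power. lra.
  - replace (1 - q - 1) with (- q) in Hc1 by ring.
    assert (Hcq : Rpower c (- q) >= Rpower (x + 1) (- q)).
    { rewrite !Rpower_Ropp. apply Rle_ge, Rinv_le_contravar.
      - unfold Rpower; apply exp_pos.
      - apply Rle_Rpower_l; lra. }
    apply (Rmult_le_reg_r (q - 1)); [lra|]. unfold Rdiv. rewrite Rmult_assoc, Rinv_l by lra.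
    nra.
Qed.

Lemma pseries_aux q m : 1 < q ->
  Rsum (map (fun n => Rpower (INR (S n)) (- q)) (seq 0 (S m))) <=
  1 + (1 - Rpower (INR (S m)) (1 - q)) / (q - 1).
Proof.
  intros Hq. induction m.
  - unfold Rsum; simpl. rewrite !Rpower_one. unfold Rdiv. lra.
  - rewrite seq_S, Rsum_snoc.
    replace (INR (S (S m))) with (INR (S m) + 1) by (rewrite (S_INR (S m)); auto).
    assert (H1 : 1 <= INR (S m)) by (rewrite S_INR; generalize (pos_INR m); lra).
    assert (H2 := pstep q (INR (S m)) Hq H1).
    change (INR (S (0 + S m))) with (INR (S (S m))).
    replace (INR (S (S m))) with (INR (S m) + 1) by (symmetry; apply S_INR).
    unfold Rdiv in *. lra.
Qed.

Lemma pseries_bound q m : 1 < q ->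
  Rsum (map (fun n => Rpower (INR (S n)) (- q)) (seq 0 m)) <= 1 + 1 / (q - 1).
Proof.
  intros Hq. assert (0 < 1 / (q - 1)) by (apply Rdiv_lt_0_compat; lra).
  destruct m.
  - unfold Rsum; simpl. lra.
  - eapply Rle_trans; [apply pseries_aux; auto|].
    assert (0 < Rpower (INR (S m)) (1 - q)) by (unfold Rpower; apply exp_pos).
    unfold Rdiv in *. assert (0 < / (q - 1)) by (apply Rinv_0_lt_compat; lra). nra.
Qed.

Lemma sum_n_Rsum (a : nat -> R) N : sum_n a N = Rsum (map a (seq 0 (S N))).
Proof.
  induction N.
  - rewrite sum_O. unfold Rsum; simpl. ring.
  - rewrite sum_Sn, IHN, (seq_S (S N)), Rsum_snoc. unfold plus; simpl. ring.
Qed.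

Lemma Rsum_trunc (a : nat -> R) m N : (forall n, (m <= n)%nat -> a n = 0) -> (m <= N)%nat ->
  Rsum (map a (seq 0 N)) = Rsum (map a (seq 0 m)).
Proof.
  intros Ha HN. replace N with (m + (N - m))%nat by lia.
  rewrite seq_app, map_app, Rsum_app.
  assert (Hz : Rsum (map a (seq (0 + m) (N - m))) = 0).
  { rewrite (Rsum_ext_in a (fun _ => 0)). apply Rsum_zero.
    intros x Hx. apply in_seq in Hx. apply Ha. lia. }
  rewrite Hz. ring.
Qed.

Lemma finite_series (a : nat -> R) m : (forall n, (m <= n)%nat -> a n = 0) ->
  is_series a (Rsum (map a (seq 0 m))).
Proof.
  intros Ha. intros P HP. exists m. intros N HN.
  rewrite sum_n_Rsum. rewrite (Rsum_trunc a m) by (auto; lia).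
  apply locally_singleton; auto.
Qed.

Lemma Rsum_le_Series (b : nat -> R) m : (forall n, 0 <= b n) -> ex_series b ->
  Rsum (map b (seq 0 m)) <= Series b.
Proof.
  intros Hb Hex.
  set (c := fun n => if (n <? m)%nat then b n else 0).
  assert (Hc : is_series c (Rsum (map c (seq 0 m)))).
  { apply finite_series. intros n Hn. unfold c. destruct (Nat.ltb_spec n m); [lia|auto]. }
  assert (E : Rsum (map c (seq 0 m)) = Rsum (map b (seq 0 m))).
  { apply Rsum_ext_in. intros x Hx. apply in_seq in Hx. unfold c. destruct (Nat.ltb_spec x m); [auto|lia]. }
  rewrite <- E, <- (is_series_unique c _ Hc).
  apply Series_le; auto. intros n. unfold c. destruct (n <? m)%nat; split; try lra; auto.
Qed.

Lemma Rpower_pos x y : 0 < Rpower x y.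
Proof. unfold Rpower. apply exp_pos. Qed.

Lemma Esum_seq m (v : zseq) :
  Esum m v = Rsum (map (hdot_term 0 v) (seq 0 m)).
Proof.
  unfold Esum, zrange. rewrite map_app, Rsum_app, !map_map, <- Rsum_plus.
  apply Rsum_ext_in. intros n _. unfold hdot_term.
  rewrite Rmult_0_r, Rpower_O by (apply lt_0_INR; lia). ring.
Qed.

Lemma abs_pos_k n : Rabs (IZR (Z.of_nat (S n))) = INR (S n).
Proof. rewrite <- INR_IZR_INZ. apply Rabs_right. apply Rle_ge, pos_INR. Qed.
Lemma abs_neg_k n : Rabs (IZR (- Z.of_nat (S n))) = INR (S n).
Proof. rewrite opp_IZR, Rabs_Ropp. apply abs_pos_k. Qed.

Theorem proposition4p5 :
  forall S : R, 3 / 2 < S ->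
  exists CS : R,
    forall (T s0 : R) (m : nat) (v0 : zseq) (v v' : R -> zseq),
      0 < T -> 0 <= s0 -> in_Hdot s0 v0 ->
      galerkin_solution m T v0 v v' ->
      forall t : R, 0 <= t <= T ->
        ex_series (hdot_term (- S) (v' t)) /\
        sqrt (hdot_norm2 (- S) (v' t)) <= CS * hdot_norm2 0 v0.
Proof.
  intros Sr HS.
  set (q := 2 * Sr - 2). assert (Hq : 1 < q) by (unfold q; lra).
  set (Zc := 1 + 1 / (q - 1)).
  assert (HZ : 0 < Zc) by (unfold Zc; assert (0 < 1 / (q - 1)) by (apply Rdiv_lt_0_compat; lra); lra).
  exists (sqrt (Zc / 2)).
  intros T s0 m v0 v v' HT Hs0 [Hreal Hex] [Hv0 [Hd Hrhs]] t Ht.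
  assert (H0 : forall k, In k (zrange m) -> v 0 (- k)%Z = Cconj (v 0 k)).
  { intros k Hk. assert (H1 := zr_nz m k Hk). assert (H2 := zr_nz m _ (zrange_opp m k Hk)).
    rewrite !Hv0 by auto. apply Hreal; auto. }
  set (E := Esum m (v t)).
  assert (HEnn : 0 <= E) by apply Esum_nonneg.
  assert (HE : E = Esum m (v 0)) by (apply (conservation m T v v'); auto).
  assert (HE0 : Esum m (v 0) = Esum m v0).
  { unfold Esum. apply Rsum_ext_in. intros k Hk. rewrite Hv0; auto. apply (zr_nz m); auto. }
  assert (Hex0 : ex_series (hdot_term 0 v0)).
  { apply (@ex_series_le R_AbsRing R_CompleteNormedModule _ (hdot_term s0 v0)); auto. intros n.
    unfold hdot_term. rewrite Rmult_0_r.
    assert (HA : 0 <= Cmod (v0 (Z.of_nat (S n))) ^ 2 + Cmod (v0 (- Z.of_nat (S n))%Z) ^ 2)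
      by (apply Rplus_le_le_0_compat; apply pow2_ge_0).
    assert (HB : 1 <= INR (S n)) by (rewrite S_INR; generalize (pos_INR n); lra).
    rewrite Rpower_O by lra.
    assert (Rpower (INR (S n)) 0 <= Rpower (INR (S n)) (2 * s0)) by (apply Rle_Rpower; lra).
    rewrite Rpower_O in H by lra.
    change (norm (1 * (Cmod (v0 (Z.of_nat (S n))) ^ 2 + Cmod (v0 (- Z.of_nat (S n))%Z) ^ 2)))
      with (Rabs (1 * (Cmod (v0 (Z.of_nat (S n))) ^ 2 + Cmod (v0 (- Z.of_nat (S n))%Z) ^ 2))).
    rewrite Rabs_right by lra. nra. }
  assert (HEle : E <= hdot_norm2 0 v0).
  { rewrite HE, HE0, Esum_seq. unfold hdot_norm2. apply Rsum_le_Series; auto.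
    intros n. unfold hdot_term. apply Rmult_le_pos. left; apply Rpower_pos.
    apply Rplus_le_le_0_compat; apply pow2_ge_0. }
  set (a := hdot_term (- Sr) (v' t)).
  assert (Hmag : forall k, k <> 0%Z -> Cmod (v' t k) <= Rabs (IZR k) / 2 * E).
  { intros k Hk. rewrite Hrhs by auto. apply rhs_mag. }
  assert (Ha0 : forall n, (m <= n)%nat -> a n = 0).
  { intros n Hn. unfold a, hdot_term.
    rewrite !Hrhs by (auto; lia). rewrite !rhs_eq.
    assert (E1 : inI m (Z.of_nat (S n)) = false).
    { destruct (inI m (Z.of_nat (S n))) eqn:E'; auto. apply inI_true in E'. lia. }
    rewrite inI_opp, E1, Cmod_C0. ring. }
  assert (Hab : forall n, a n <= / 2 * (E * E) * Rpower (INR (S n)) (- q)).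
  { intros n. unfold a, hdot_term.
    set (x := INR (S n)).
    assert (Hx : 0 < x) by (apply lt_0_INR; lia).
    assert (B1 : Cmod (v' t (Z.of_nat (S n))) ^ 2 <= (x / 2 * E) ^ 2).
    { apply pow_incr. split; [apply Cmod_ge_0|]. unfold x. rewrite <- (abs_pos_k n). apply Hmag. lia. }
    assert (B2 : Cmod (v' t (- Z.of_nat (S n))%Z) ^ 2 <= (x / 2 * E) ^ 2).
    { apply pow_incr. split; [apply Cmod_ge_0|]. unfold x. rewrite <- (abs_neg_k n). apply Hmag. lia. }
    assert (Hp : Rpower x (- q) = Rpower x (2 * - Sr) * x ^ 2).
    { rewrite <- (Rpower_pow 2 x Hx). rewrite <- Rpower_plus. f_equal. simpl. unfold q. ring. }
    rewrite Hp. assert (HP := Rpower_pos x (2 * - Sr)).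
    apply Rle_trans with (Rpower x (2 * - Sr) * ((x / 2 * E) ^ 2 + (x / 2 * E) ^ 2)).
    - apply Rmult_le_compat_l; lra.
    - apply Req_le. field. }
  assert (Hann : forall n, 0 <= a n).
  { intros n. unfold a, hdot_term. apply Rmult_le_pos. left; apply Rpower_pos.
    apply Rplus_le_le_0_compat; apply pow2_ge_0. }
  assert (Hser := finite_series a m Ha0).
  split. { eexists; eauto. }
  unfold hdot_norm2. fold a. rewrite (is_series_unique a _ Hser).
  assert (Hsum : Rsum (map a (seq 0 m)) <= Zc / 2 * (E * E)).
  { eapply Rle_trans. { apply (Rsum_le a (fun n => / 2 * (E * E) * Rpower (INR (S n)) (- q))). intros; auto. }
    rewrite Rsum_scal. assert (Hp := pseries_bound q m Hq). fold Zc in Hp.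
    assert (0 <= / 2 * (E * E)) by nra.
    apply Rle_trans with (/ 2 * (E * E) * Zc). { apply Rmult_le_compat_l; auto. }
    apply Req_le. field. }
  eapply Rle_trans. { apply sqrt_le_1_alt. apply Hsum. }
  rewrite sqrt_mult by nra. rewrite sqrt_square by auto.
  apply Rmult_le_compat_l; auto. apply sqrt_pos.
Qed.
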